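(* Let $G$ be a topological group, $m\in\mathbb N\cup\{\infty\}$, $\rho\colon G\to\mathrm{Isom}(\mathbf H^m_{\mathbb C})_o$ a representation and $x\in\mathbf H^m_{\mathbb C}$. Let $\alpha(g_1,g_2,g_3)=\mathrm{Cart}(\rho(g_1)x,\rho(g_2)x,\rho(g_3)x)$. If $\rho(G)$ fixes a point $y\in\partial\mathbf H^m_{\mathbb C}$, then there exists an alternating $G$-invariant $1$-cochain $\omega\colon G^2\to\mathbb R$ such that $\partial\omega=\alpha$.
   Context: $\mathbf H^m_{\mathbb C}$ is the projectivization of the positive vectors of a separable complex Hilbert space with a strongly non-degenerate Hermitian form $B$ of signature $(1,m)$ (linear in the first variable), with $\cosh d([v],[w])=|B(v,w)|/\sqrt{B(v,v)B(w,w)}$; its boundary is the set of isotropic lines; $\mathrm{Isom}(\mathbf H^m_{\mathbb C})_o=PU(1,m)$. A representation is an orbitally continuous homomorphism. The Cartan argument is $\mathrm{Cart}(x,y,z)=\arg\big(B(\tilde x,\tilde y)B(\tilde y,\tilde z)B(\tilde z,\tilde x)\big)$ for any lifts (defined also when some points are on the boundary, using isotropic lifts). A $1$-cochain $\omega$ is alternating if $\omega(l,g)=-\omega(g,l)$ and $G$-invariant if $\omega(hg,hl)=\omega(g,l)$; $\partial\omega(g,l,k)=\omega(l,k)-\omega(g,k)+\omega(g,l)$. *)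

(* Defs.v *)
From HB Require Import structures.
From mathcomp Require Import all_boot all_order all_algebra.
From mathcomp Require Import all_classical all_reals all_analysis.
From mathcomp Require Import complex.
Set Implicit Arguments. Unset Strict Implicit. Unset Printing Implicit Defensive.
Import Order.TTheory GRing.Theory Num.Theory.
Import numFieldNormedType.Exports.
Local Open Scope ring_scope.
Local Open Scope complex_scope.
Local Open Scope classical_set_scope.

Section Defs.
Context {R : realType}.

Definition cre (z : R[i]) : R := complex.Re z.
Definition cim (z : R[i]) : R := complex.Im z.
Definition cnorm2 (z : R[i]) : R := cre z ^+ 2 + cim z ^+ 2.
Definition cabs (z : R[i]) : R := Num.sqrt (cnorm2 z).

(* argument of a complex number, with values in (-pi, pi]  (atan2 convention; arg 0 = 0) *)
Definition carg (z : R[i]) : R :=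
  let a := cre z in let b := cim z in
  if 0 < a then atan (b / a)
  else if a < 0 then (if 0 <= b then atan (b / a) + pi else atan (b / a) - pi)
  else if 0 < b then pi / 2
  else if b < 0 then - (pi / 2)
  else 0.

Definition csum (u : nat -> R[i]) : R[i] :=
  Complex (limn (@series R (fun k => cre (u k)))) (limn (@series R (fun k => cim (u k)))).

(* The model of the Hilbert space: m = Some n means dimension n+1 (i.e. C^{1+n}),
   m = None means m = infinity, i.e. l^2(N) over C.  Vectors are sequences nat -> C. *)
Definition in_model (m : option nat) (v : nat -> R[i]) : Prop :=
  (forall n, m = Some n -> forall i, (n < i)%N -> v i = 0) /\
  cvgn (@series R (fun i => cnorm2 (v i))).

(* The Hermitian form of signature (1,m), linear in the first variable:
   B(v,w) = v_0 conj(w_0) - sum_{i>=1} v_i conj(w_i). *)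
Definition Bform (v w : nat -> R[i]) : R[i] :=
  v 0%N * (w 0%N)^* - csum (fun i => v i.+1 * (w i.+1)^*).

(* points of H^m_C (lifts): positive vectors *)
Definition in_Hm (m : option nat) (v : nat -> R[i]) : Prop :=
  in_model m v /\ 0 < cre (Bform v v).

(* points of the boundary (lifts): nonzero isotropic vectors *)
Definition in_boundary (m : option nat) (v : nat -> R[i]) : Prop :=
  in_model m v /\ (exists i, v i != 0) /\ Bform v v = 0.

(* hyperbolic distance between the lines [v], [w]:
   cosh d = |B(v,w)| / sqrt(B(v,v) B(w,w)),  acosh c = ln (c + sqrt (c^2 - 1)). *)
Definition acoshR (c : R) : R := ln (c + Num.sqrt (c ^+ 2 - 1)).
Definition hdist (v w : nat -> R[i]) : R :=
  acoshR (cabs (Bform v w) / Num.sqrt (cre (Bform v v) * cre (Bform w w))).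

Definition Cart (a b c : nat -> R[i]) : R :=
  carg (Bform a b * Bform b c * Bform c a).

Definition in_U1m (m : option nat) (T : (nat -> R[i]) -> (nat -> R[i])) : Prop :=
  (forall v, in_model m v -> in_model m (T v)) /\
  (forall (a : R[i]) v w, in_model m v -> in_model m w ->
      forall i, T (fun j => a * v j + w j) i = a * T v i + T w i) /\
  (forall v w, in_model m v -> in_model m w -> Bform (T v) (T w) = Bform v w) /\
  (forall v w, in_model m v -> in_model m w ->
      (forall i, T v i = T w i) -> forall i, v i = w i) /\
  (forall w, in_model m w -> exists2 v, in_model m v & forall i, T v i = w i).

End Defs.

Definition is_topological_group (G : topologicalType)
    (mul : G -> G -> G) (inv : G -> G) (one : G) : Prop :=
  (forall a b c, mul a (mul b c) = mul (mul a b) c) /\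
  (forall a, mul one a = a) /\ (forall a, mul a one = a) /\
  (forall a, mul (inv a) a = one) /\ (forall a, mul a (inv a) = one) /\
  continuous (fun p : G * G => mul p.1 p.2) /\ continuous inv.

(* A representation rho : G -> Isom(H^m_C)_o = PU(1,m), given through lifts
   rho g in U(1,m):  each rho g is in U(1,m); g |-> [rho g] is a homomorphism to
   PU(1,m) = U(1,m)/U(1), i.e. rho (g h) = lambda * rho g o rho h with |lambda| = 1;
   and rho is orbitally continuous: g |-> rho(g)[x] is continuous into (H^m_C, d)
   for every x in H^m_C. *)
Definition is_representation {R : realType} (G : topologicalType)
    (mul : G -> G -> G) (m : option nat)
    (rho : G -> (nat -> R[i]) -> (nat -> R[i])) : Prop :=
  (forall g, in_U1m m (rho g)) /\
  (forall g h, exists2 lam : R[i], cnorm2 lam = 1 &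
      forall v, in_model m v -> forall i, rho (mul g h) v i = lam * rho g (rho h v) i) /\
  (forall x, in_Hm m x -> forall g0 : G,
      (fun g => hdist (rho g x) (rho g0 x)) @ g0 --> (0 : R)).

Definition fixes_point {R : realType} (T : (nat -> R[i]) -> (nat -> R[i]))
    (y : nat -> R[i]) : Prop :=
  exists lam : R[i], forall i, T y i = lam * y i.

(* Main.v *)
Require Import Defs.
From HB Require Import structures.
From mathcomp Require Import all_boot all_order all_algebra.
From mathcomp Require Import all_classical all_reals all_analysis.
From mathcomp Require Import complex.
From mathcomp Require Import ring lra.
Import Order.TTheory GRing.Theory Num.Theory.
Import numFieldNormedType.Exports.
Local Open Scope ring_scope.
Local Open Scope complex_scope.
Set Implicit Arguments. Unset Strict Implicit. Unset Printing Implicit Defensive.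
Local Notation "x ^cj" := (conjc x) (at level 2, format "x ^cj").

Section Trig.
Variable R : realType.
Implicit Types z w : R[i].

Lemma creM z w : cre (z * w) = cre z * cre w - cim z * cim w.
Proof. by case: z w => [x y] [u v]. Qed.
Lemma cimM z w : cim (z * w) = cre z * cim w + cim z * cre w.
Proof. by case: z w => [x y] [u v]; rewrite /cre /cim /=. Qed.

Lemma carg_pos z : 0 < cre z -> carg z = atan (cim z / cre z).
Proof. by move=> h; rewrite /carg h. Qed.

Lemma cnorm2_ge0 z : 0 <= cnorm2 z.
Proof. by rewrite /cnorm2 addr_ge0 // sqr_ge0. Qed.

Lemma cabs_gt0 z : 0 < cre z -> 0 < cabs z.
Proof. move=> h; rewrite /cabs sqrtr_gt0 /cnorm2.
have : 0 < cre z ^+ 2 by rewrite exprn_gt0.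
have := sqr_ge0 (cim z). lra. Qed.

Lemma polar z : 0 < cre z ->
  cre z = cabs z * cos (carg z) /\ cim z = cabs z * sin (carg z).
Proof.
move=> h; rewrite carg_pos //.
set t := cim z / cre z.
have ht : cim z = t * cre z by rewrite /t mulfVK // gt_eqF.
have hs : 0 < 1 + t ^+ 2 by have := sqr_ge0 t; lra.
have hq : cabs z = cre z * Num.sqrt (1 + t ^+ 2).
  rewrite /cabs /cnorm2 ht.
  have -> : cre z ^+ 2 + (t * cre z) ^+ 2 = cre z ^+ 2 * (1 + t ^+ 2) by ring.
  by rewrite sqrtrM ?sqr_ge0 // sqrtr_sqr ger0_norm // ltW.
have hsq : 0 < Num.sqrt (1 + t ^+ 2) by rewrite sqrtr_gt0.
have hc : cos (atan t) = (Num.sqrt (1 + t ^+ 2))^-1 by rewrite cos_atan.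
have hsn : sin (atan t) = t * (Num.sqrt (1 + t ^+ 2))^-1.
  have := atanK t; rewrite /tan => e.
  rewrite -hc -{2}e mulfVK // hc invr_eq0 gt_eqF //.
split.
  by rewrite hq hc; field; rewrite gt_eqF.
by rewrite hq hsn ht; field; rewrite gt_eqF.
Qed.

Lemma carg_range z : 0 < cre z -> - (pi / 2) < carg z < pi / 2.
Proof. by move=> h; rewrite carg_pos // atan_gtNpi2 atan_ltpi2. Qed.

Lemma carg_conj z : 0 < cre z -> carg (z^*) = - carg z.
Proof.
case: z => a b h; rewrite !carg_pos //= /cre /cim /=.
by rewrite mulNr atanN.
Qed.

Lemma carg_scale (r : R) z : 0 < r -> 0 < cre z -> carg (r%:C * z) = carg z.
Proof.
move=> hr h.
have e1 : cre (r%:C * z) = r * cre z by rewrite creM /cre /= mul0r subr0.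
have e2 : cim (r%:C * z) = r * cim z by rewrite cimM /cre /cim /= mul0r addr0.
rewrite !carg_pos // ?e1 ?mulr_gt0 // e2; congr atan; field; rewrite !gt_eqF //.
Qed.

Lemma cos_eq1_small (d : R) : cos d = 1 -> - (pi *+ 2) < d < pi *+ 2 -> d = 0.
Proof.
move=> hc /andP[h1 h2].
have e : d = d / 2 + d / 2 by rewrite -splitr.
have hs : sin (d / 2) = 0.
  rewrite e cosD in hc.
  have hh := cos2Dsin2 (d / 2). move: hc hh; rewrite !expr2.
  set c := cos (d / 2) * cos (d / 2); set s := sin (d / 2) * sin (d / 2).
  move=> hc hh. have : s = 0 by lra.
  by rewrite /s => /eqP; rewrite mulf_eq0 orbb => /eqP.
have hpi : 0 < pi :> R := pi_gt0 R.
case: (ltgtP (d / 2) 0) => hd.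
- have : 0 < sin (- (d / 2)).
    apply: sin_gt0_pi; apply/andP; split; first by rewrite oppr_gt0.
    rewrite ltrNl; move: h1; rewrite mulr2n. lra.
  by rewrite sinN hs oppr0 ltxx.
- have : 0 < sin (d / 2).
    apply: sin_gt0_pi; rewrite hd /=; move: h2; rewrite mulr2n. lra.
  by rewrite hs ltxx.
- by rewrite e hd addr0.
Qed.

Lemma carg_prod3 z1 z2 z3 w (r : R) :
  0 < cre z1 -> 0 < cre z2 -> 0 < cre z3 -> 0 < cre w -> 0 < r ->
  z1 * z2 * z3 = r%:C * w ->
  carg z1 + carg z2 + carg z3 = carg w.
Proof.
move=> h1 h2 h3 hw hr e.
have [c1 s1] := polar h1; have [c2 s2] := polar h2; have [c3 s3] := polar h3.
have [cw sw] := polar hw.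
have k1 := cabs_gt0 h1; have k2 := cabs_gt0 h2; have k3 := cabs_gt0 h3.
have kw := cabs_gt0 hw.
set S := carg z1 + carg z2 + carg z3.
set K := cabs z1 * cabs z2 * cabs z3.
set L := r * cabs w.
have eR : K * cos S = L * cos (carg w).
  have := congr1 (@cre R) e.
  rewrite !(creM, cimM) c1 s1 c2 s2 c3 s3 cw /cre /cim /= mul0r subr0 => e'.
  rewrite /S !cosD !sinD /L /K; nra.
have eI : K * sin S = L * sin (carg w).
  have := congr1 (@cim R) e.
  rewrite !(creM, cimM) c1 s1 c2 s2 c3 s3 sw /cre /cim /= mul0r addr0 => e'.
  rewrite /S !sinD !cosD /L /K; nra.
have Kp : 0 < K by rewrite /K !mulr_gt0.
have Lp : 0 < L by rewrite /L !mulr_gt0.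
have KL : K = L.
  have : K ^+ 2 = L ^+ 2.
    have a := cos2Dsin2 S; have b := cos2Dsin2 (carg w).
    transitivity ((K * cos S) ^+ 2 + (K * sin S) ^+ 2).
      by rewrite -[LHS]mulr1 -a; ring.
    by rewrite eR eI -[RHS]mulr1 -b; ring.
  move/eqP; rewrite eqf_sqr => /orP[/eqP //|/eqP h]; move: Kp Lp; rewrite h. lra.
have eC : cos S = cos (carg w) by apply: (mulfI (x:=K)); [rewrite gt_eqF|rewrite eR KL].
have eS : sin S = sin (carg w) by apply: (mulfI (x:=K)); [rewrite gt_eqF|rewrite eI KL].
have hd : cos (S - carg w) = 1.
  by rewrite cosD cosN sinN eC eS -(cos2Dsin2 (carg w)); ring.
have := cos_eq1_small hd.
have [a1 b1] := andP (carg_range h1); have [a2 b2] := andP (carg_range h2).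
have [a3 b3] := andP (carg_range h3); have [a4 b4] := andP (carg_range hw).
have hpi : 0 < pi :> R := pi_gt0 R.
rewrite /S mulr2n => /(_ _) H.
have : S - carg w = 0.
  apply: H; apply/andP; split; rewrite /S; lra.
rewrite /S; lra.
Qed.
End Trig.

Section An.
Variable R : realType.

Definition summable (u : nat -> R) := cvgn (series u).

Lemma series_shift (u : nat -> R) n :
  series (fun i => u i.+1) n = series u n.+1 - u 0%N.
Proof.
by rewrite !seriesEnat /= big_nat_recl // [u 0%N + _]addrC addrK.
Qed.

Lemma summable_shift u : summable u -> summable (fun i => u i.+1).
Proof.
move=> hu; rewrite /summable.
have -> : series (fun i => u i.+1) = (fun n => series u n.+1) - (fun=> u 0%N).
  by apply/funext => n; rewrite series_shift.
apply: is_cvgB; last exact: is_cvg_cst.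
apply/cvg_ex; exists (limn (series u)).
by rewrite (cvg_shiftS (series u)).
Qed.

Lemma summable_abs (u c : nat -> R) : (forall i, `|u i| <= c i) -> summable c ->
  summable u.
Proof.
move=> h hc; apply: normed_cvg.
apply: (@series_le_cvg R (fun i => `|u i|) c) => //.
by move=> i; exact: le_trans (normr_ge0 _) (h i).
Qed.

Lemma summableM (p : R) u : summable u ->
  summable (fun i => p * u i) /\ limn (series (fun i => p * u i)) = p * limn (series u).
Proof.
move=> hu; rewrite /summable.
have -> : series (fun i => p * u i) = (fun=> p) \* series u.
  by apply/funext => n; rewrite !seriesEnat /= mulr_sumr.
split; first by apply: is_cvgMl_tmp; exact: hu.
rewrite limM //; first by rewrite lim_cst.
exact: is_cvg_cst.
Qed.

Lemma summableD u v : summable u -> summable v ->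
  summable (fun i => u i + v i) /\
  limn (series (fun i => u i + v i)) = limn (series u) + limn (series v).
Proof.
move=> hu hv; rewrite /summable.
have -> : series (fun i => u i + v i) = series u + series v.
  by apply/funext => n; rewrite !seriesEnat /= big_split.
by split; [apply: is_cvgD | rewrite limD].
Qed.

Lemma lim_lin (p q : R) u v w : summable u -> summable v -> summable w ->
  summable (fun i => p * u i - q * v i + w i) /\
  limn (series (fun i => p * u i - q * v i + w i)) =
    p * limn (series u) - q * limn (series v) + limn (series w).
Proof.
move=> hu hv hw.
have [s1 l1] := summableM p hu.
have [s2 l2] := summableM (- q) hv.
have [s3 l3] := summableD s1 s2.
have [s4 l4] := summableD s3 hw.
have E : (fun i => p * u i - q * v i + w i) =
   (fun i => ((fun i => p * u i) i + (fun i => - q * v i) i) + w i).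
  by apply/funext => i /=; rewrite mulNr.
rewrite E; split => //.
by rewrite l4 l3 l1 l2 mulNr.
Qed.

Lemma summable0 : summable (fun=> 0).
Proof.
rewrite /summable.
have -> : series (fun=> 0 : R) = fun=> 0 by apply/funext => n; rewrite seriesEnat /= big1.
exact: is_cvg_cst.
Qed.

Lemma lim_series_ge0 u : summable u -> (forall i, 0 <= u i) -> 0 <= limn (series u).
Proof.
move=> hu h.
have -> : 0 = limn (series (fun=> 0 : R)).
  have -> : series (fun=> 0 : R) = fun=> 0 by apply/funext => n; rewrite seriesEnat /= big1.
  by rewrite lim_cst.
by apply: lim_series_le => //; exact: summable0.
Qed.

Lemma lim_series_eq0 u : summable u -> (forall i, 0 <= u i) ->
  limn (series u) = 0 -> forall i, u i = 0.
Proof.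
move=> hu h e i.
have nd : nondecreasing_seq (series u).
  by apply/nondecreasing_seqP => n; rewrite seriesSr lerDl.
have := nondecreasing_cvgn_le nd hu i.+1; rewrite e.
rewrite seriesSr => hle.
have h2 : 0 <= series u i.
  by rewrite seriesEnat /=; apply: sumr_ge0 => k _.
apply/eqP; rewrite eq_le h andbT.
by apply: le_trans hle; rewrite lerDr.
Qed.

End An.

Section Cx.
Variable R : realType.
Implicit Types z w a : R[i].

Lemma cext z w : cre z = cre w -> cim z = cim w -> z = w.
Proof. by case: z w => [x y] [u v] /= -> ->. Qed.
Lemma creD z w : cre (z + w) = cre z + cre w. Proof. by case: z w => [x y] [u v]. Qed.
Lemma cimD z w : cim (z + w) = cim z + cim w. Proof. by case: z w => [x y] [u v]. Qed.
Lemma creN z : cre (- z) = - cre z. Proof. by case: z. Qed.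
Lemma cimN z : cim (- z) = - cim z. Proof. by case: z. Qed.
Lemma creJ z : cre (z^*) = cre z. Proof. by case: z. Qed.
Lemma cimJ z : cim (z^*) = - cim z. Proof. by case: z. Qed.
Lemma creR (r : R) : cre (r%:C) = r. Proof. by []. Qed.
Lemma cimR (r : R) : cim (r%:C) = 0. Proof. by []. Qed.
Lemma creMJ z w : cre (z * w^*) = cre z * cre w + cim z * cim w.
Proof. by rewrite creM creJ cimJ; ring. Qed.
Lemma cimMJ z w : cim (z * w^*) = cim z * cre w - cre z * cim w.
Proof. by rewrite cimM creJ cimJ; ring. Qed.
Lemma mulJ z : z * z^* = (cnorm2 z)%:C.
Proof. by apply: cext; rewrite ?creMJ ?cimMJ ?creR ?cimR /cnorm2 ?expr2; ring. Qed.
Lemma cnorm2M z w : cnorm2 (z * w) = cnorm2 z * cnorm2 w.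
Proof. by rewrite /cnorm2 creM cimM; ring. Qed.
Lemma cnorm2_eq0 z : cnorm2 z = 0 -> z = 0.
Proof.
rewrite /cnorm2 => h.
have h1 : cre z ^+ 2 = 0 by have := sqr_ge0 (cre z); have := sqr_ge0 (cim z); lra.
have h2 : cim z ^+ 2 = 0 by have := sqr_ge0 (cre z); have := sqr_ge0 (cim z); lra.
move/eqP: h1; rewrite sqrf_eq0 => /eqP h1.
move/eqP: h2; rewrite sqrf_eq0 => /eqP h2.
by apply: cext; rewrite ?h1 ?h2.
Qed.

Definition csummable (f : nat -> R[i]) :=
  summable (fun i => cre (f i)) /\ summable (fun i => cim (f i)).

Lemma csum_lin a f g : csummable f -> csummable g ->
  csummable (fun i => a * f i + g i) /\ csum (fun i => a * f i + g i) = a * csum f + csum g.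
Proof.
move=> [fr fi] [gr gi].
have [s1 l1] := lim_lin (cre a) (cim a) fr fi gr.
have [s2 l2] := lim_lin (cre a) (- cim a) fi fr gi.
have E1 : (fun i => cre (a * f i + g i)) =
    (fun i => cre a * cre (f i) - cim a * cim (f i) + cre (g i)).
  by apply/funext => i; rewrite creD creM.
have E2 : (fun i => cim (a * f i + g i)) =
    (fun i => cre a * cim (f i) - (- cim a) * cre (f i) + cim (g i)).
  by apply/funext => i; rewrite cimD cimM; ring.
split; first by rewrite /csummable E1 E2.
apply: cext.
  by rewrite /csum /cre /= -/(cre _) E1 l1 creD creM.
by rewrite /csum /cim /= -/(cim _) E2 l2 cimD cimM /cre /cim /=; ring.
Qed.

Lemma csum_conj f : csummable f ->
  csummable (fun i => (f i)^*) /\ csum (fun i => (f i)^*) = (csum f)^*.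
Proof.
move=> [fr fi].
have [s2 l2] := lim_lin 0 1 fi fi (@summable0 R).
have E1 : (fun i => cre ((f i)^*)) = (fun i => cre (f i)).
  by apply/funext => i; rewrite creJ.
have E2 : (fun i => cim ((f i)^*)) = (fun i => 0 * cim (f i) - 1 * cim (f i) + 0).
  by apply/funext => i; rewrite cimJ; ring.
split; first by rewrite /csummable E1 E2.
apply: cext.
  by rewrite creJ /csum /cre /= -/(cre _) E1.
rewrite cimJ /csum /cim /= -/(cim _) E2 l2.
have -> : limn (series (fun=> 0 : R)) = 0.
  have -> : series (fun=> 0 : R) = fun=> 0 by apply/funext => n; rewrite seriesEnat /= big1.
  by rewrite lim_cst.
ring.
Qed.

Lemma csum_herm_pos f : csummable f -> (forall i, cim (f i) = 0) -> (forall i, 0 <= cre (f i)) ->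
  cim (csum f) = 0 /\ 0 <= cre (csum f).
Proof.
move=> [fr fi] h0 hp; split.
  rewrite /csum /cim /= -/(cim _).
  have -> : (fun i => cim (f i)) = fun=> 0 by apply/funext => i; rewrite h0.
  have -> : series (fun=> 0 : R) = fun=> 0 by apply/funext => n; rewrite seriesEnat /= big1.
  by rewrite lim_cst.
by rewrite /csum /cre /= -/(cre _); apply: lim_series_ge0.
Qed.

Lemma csum_zero f : csummable f -> (forall i, 0 <= cre (f i)) -> cre (csum f) = 0 ->
  forall i, cre (f i) = 0.
Proof.
move=> [fr fi] hp; rewrite /csum /cre /= -/(cre _) => e.
exact: lim_series_eq0.
Qed.

Lemma abs_creMJ z w : `|cre (z * w^*)| <= cnorm2 z + cnorm2 w.
Proof.
rewrite creMJ /cnorm2 ler_norml; apply/andP; split.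
  by have := sqr_ge0 (cre z + cre w); have := sqr_ge0 (cim z + cim w); rewrite !expr2; nra.
by have := sqr_ge0 (cre z - cre w); have := sqr_ge0 (cim z - cim w); rewrite !expr2; nra.
Qed.
Lemma abs_cimMJ z w : `|cim (z * w^*)| <= cnorm2 z + cnorm2 w.
Proof.
rewrite cimMJ /cnorm2 ler_norml; apply/andP; split.
  by have := sqr_ge0 (cim z + cre w); have := sqr_ge0 (cre z - cim w); rewrite !expr2; nra.
by have := sqr_ge0 (cim z - cre w); have := sqr_ge0 (cre z + cim w); rewrite !expr2; nra.
Qed.

Lemma cnorm2D_le z w : cnorm2 (z + w) <= 2 * cnorm2 z + 2 * cnorm2 w.
Proof.
rewrite /cnorm2 creD cimD.
by have := sqr_ge0 (cre z - cre w); have := sqr_ge0 (cim z - cim w); rewrite !expr2; nra.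
Qed.

Variable m : option nat.
Notation M := (in_model m).
Implicit Types (v u : nat -> R[i]).

Lemma M_tail v : M v -> summable (fun i => cnorm2 (v i.+1)).
Proof. by move=> [_ h]; exact: (@summable_shift R (fun i => cnorm2 (v i)) h). Qed.

Lemma M_csum v (w : nat -> R[i]) : M v -> M w -> csummable (fun i => v i.+1 * (w i.+1)^*).
Proof.
move=> hv hw.
have [s _] := summableD (M_tail hv) (M_tail hw).
split; apply: summable_abs s => i; [exact: abs_creMJ | exact: abs_cimMJ].
Qed.

Lemma M_lin a v (w : nat -> R[i]) : M v -> M w -> M (fun j => a * v j + w j).
Proof.
move=> [hv1 hv2] [hw1 hw2]; split.
  by move=> n e i hi; rewrite (hv1 n e i hi) (hw1 n e i hi) mulr0 addr0.
have [s _] := lim_lin (2 * cnorm2 a) 0 hv2 hv2 (proj1 (@summableM R 2 _ hw2)).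
apply: (@series_le_cvg R _ (fun i => 2 * cnorm2 a * cnorm2 (v i) - 0 * cnorm2 (v i) + 2 * cnorm2 (w i))) => //.
- by move=> i; exact: cnorm2_ge0.
- move=> i; rewrite mul0r subr0; apply: addr_ge0; apply: mulr_ge0 => //;
    rewrite ?mulr_ge0 ?cnorm2_ge0 //.
- move=> i; rewrite mul0r subr0 -mulrA -cnorm2M; exact: cnorm2D_le.
Qed.

Lemma M0 : M (fun=> 0 : R[i]).
Proof.
split=> //.
have e : cnorm2 (0 : R[i]) = 0 by rewrite /cnorm2 /cre /cim /= expr2 mulr0 addr0.
rewrite e; exact: summable0.
Qed.

Definition Tf (v w : nat -> R[i]) := csum (fun i => v i.+1 * (w i.+1)^*).

Lemma T_lin a v (w : nat -> R[i]) u : M v -> M w -> M u ->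
  Tf (fun j => a * v j + w j) u = a * Tf v u + Tf w u.
Proof.
move=> hv hw hu; rewrite /Tf.
have -> : (fun i => (a * v i.+1 + w i.+1) * (u i.+1)^*) =
  (fun i => a * (v i.+1 * (u i.+1)^*) + w i.+1 * (u i.+1)^*).
  by apply/funext => i; ring.
by have [_ ->] := csum_lin a (M_csum hv hu) (M_csum hw hu).
Qed.

Lemma T_herm v (w : nat -> R[i]) : M v -> M w -> Tf w v = (Tf v w)^*.
Proof.
move=> hv hw; rewrite /Tf.
have [_ <-] := csum_conj (M_csum hv hw).
congr csum; apply/funext => i.
by rewrite rmorphM /= conjcK mulrC.
Qed.

Lemma T_pos v : M v -> cim (Tf v v) = 0 /\ 0 <= cre (Tf v v).
Proof.
move=> hv; apply: csum_herm_pos; first exact: M_csum.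
  by move=> i; rewrite mulJ.
by move=> i; rewrite mulJ creR cnorm2_ge0.
Qed.

Lemma T_zero v : M v -> cre (Tf v v) = 0 -> forall i, v i.+1 = 0.
Proof.
move=> hv e i.
have := csum_zero (M_csum hv hv) _ e i.
rewrite mulJ creR => /(_ _) h; apply: cnorm2_eq0; apply: h.
by move=> k; rewrite mulJ creR cnorm2_ge0.
Qed.

End Cx.

Section F.
Variable R : realType.

Lemma real_CS (A C N : R) : 0 <= N -> 0 <= C ->
  (forall l, 0 <= A - 2 * l * N + l ^+ 2 * N * C) -> N <= A * C.
Proof.
move=> hN hC h.
case: (ltgtP C 0) => hc; first by move: hC; lra.
  have := h C^-1.
  have -> : A - 2 * C^-1 * N + C^-1 ^+ 2 * N * C = (A * C - N) / C.
    by field; rewrite gt_eqF.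
  by rewrite pmulr_lge0 ?invr_gt0 // subr_ge0.
rewrite hc mulr0.
case: (ltgtP N 0) => hn; first by move: hN; lra.
  have := h ((A + 1) / (2 * N)).
  have -> : A - 2 * ((A + 1) / (2 * N)) * N + ((A + 1) / (2 * N)) ^+ 2 * N * C = -1.
    by rewrite hc; field; rewrite gt_eqF.
  lra.
by move: hn hN; lra.
Qed.

Variable m : option nat.
Notation M := (in_model m).
Implicit Types (v u : nat -> R[i]).

Lemma cext_real (z : R[i]) : cim z = 0 -> z = (cre z)%:C.
Proof. by move=> h; apply: cext; rewrite ?creR ?cimR. Qed.

Lemma form_CS (F : (nat -> R[i]) -> (nat -> R[i]) -> R[i])
  (Flin : forall a v (w : nat -> R[i]) u, M v -> M w -> M u ->
     F (fun j => a * v j + w j) u = a * F v u + F w u)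
  (Fherm : forall v (w : nat -> R[i]), M v -> M w -> F w v = (F v w)^*)
  v (w : nat -> R[i]) : M v -> M w -> cim (F v v) = 0 -> cim (F w w) = 0 -> 0 <= cre (F w w) ->
  (forall t, 0 <= cre (F (fun j => - t * w j + v j) (fun j => - t * w j + v j))) ->
  cnorm2 (F v w) <= cre (F v v) * cre (F w w).
Proof.
move=> hv hw hA hC hC0 h.
apply: real_CS => //; first exact: cnorm2_ge0.
move=> l; have := h (l%:C * F v w).
set t := l%:C * F v w.
have hz : M (fun j => - t * w j + v j) by apply: M_lin.
rewrite Flin // (Fherm _ _ hz hw) (Fherm _ _ hz hv) !Flin // (Fherm _ _ hv hw).
rewrite (cext_real hA) (cext_real hC) /t.
case: (F v w) => x y; rewrite /cnorm2 /cre /cim /=.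
move=> H; apply: le_trans H _; rewrite le_eqVlt; apply/orP; left; apply/eqP; ring.
Qed.

End F.

Section B.
Variable R : realType.
Variable m : option nat.
Notation M := (in_model m).
Implicit Types (v u w : nat -> R[i]) (a : R[i]).

Lemma BE v w : Bform v w = v 0%N * (w 0%N)^* - Tf v w.
Proof. by []. Qed.

Lemma B_lin a v w u : M v -> M w -> M u ->
  Bform (fun j => a * v j + w j) u = a * Bform v u + Bform w u.
Proof. by move=> hv hw hu; rewrite !BE (T_lin _ hv hw hu); ring. Qed.

Lemma B_herm v w : M v -> M w -> Bform w v = (Bform v w)^*.
Proof.
move=> hv hw; rewrite !BE (T_herm hv hw) rmorphB rmorphM /= conjcK.
by rewrite mulrC.
Qed.

Lemma B_real v : M v -> Bform v v = (cre (Bform v v))%:C.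
Proof.
move=> hv; apply: cext_real.
have h := B_herm hv hv; have : cim (Bform v v) = cim ((Bform v v)^*) by rewrite -h.
rewrite cimJ; lra.
Qed.

Lemma T_CS v w : M v -> M w -> cnorm2 (Tf v w) <= cre (Tf v v) * cre (Tf w w).
Proof.
move=> hv hw.
apply: (@form_CS R m (@Tf R) (fun a v w u hv hw hu => T_lin a hv hw hu)
   (fun v w hv hw => T_herm hv hw) v w hv hw (proj1 (T_pos hv)) (proj1 (T_pos hw))
   (proj2 (T_pos hw))).
move=> t; exact: (proj2 (T_pos (M_lin (- t) hw hv))).
Qed.

Lemma cnorm2J (z : R[i]) : cnorm2 (z^*) = cnorm2 z.
Proof. by rewrite /cnorm2 creJ cimJ sqrrN. Qed.

Lemma creB0 v : cre (Bform v v) = cnorm2 (v 0%N) - cre (Tf v v).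
Proof. by rewrite BE creD creN mulJ creR. Qed.

Lemma B_neg u v : M u -> M v -> 0 < cre (Bform u u) -> Bform v u = 0 ->
  cre (Bform v v) <= 0.
Proof.
move=> hu hv hp e.
have e2 : Tf v u = v 0%N * (u 0%N)^*.
  by move: e; rewrite BE => /eqP; rewrite subr_eq0 => /eqP ->.
have cs := T_CS hv hu; rewrite e2 cnorm2M cnorm2J in cs.
move: hp; rewrite !creB0 => hp.
have [_ X0] := T_pos hv; have [_ Y0] := T_pos hu.
move: cs hp X0 Y0.
set a := cnorm2 (v 0%N); set b := cnorm2 (u 0%N).
set X := cre (Tf v v); set Y := cre (Tf u u).
move=> cs hp X0 Y0.
rewrite leNgt; apply/negP => H.
have : X * b < a * b by rewrite ltr_pM2r //; [lra | lra].
have : X * Y <= X * b by apply: ler_wpM2l => //; lra.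
lra.
Qed.

End B.

Section G.
Variable R : realType.
Variable m : option nat.
Notation M := (in_model m).
Implicit Types (v u w p xi : nat -> R[i]) (a : R[i]).

Lemma B_xi_ne0 p xi : M p -> 0 < cre (Bform p p) -> M xi -> Bform xi xi = 0 ->
  (exists i, xi i != 0) -> Bform xi p != 0.
Proof.
move=> ha hp hx e0 [i hi]; apply/negP => /eqP e.
have e2 : Tf xi p = xi 0%N * (p 0%N)^*.
  by move: e; rewrite BE => /eqP; rewrite subr_eq0 => /eqP ->.
have cs := T_CS hx ha; rewrite e2 cnorm2M cnorm2J in cs.
have e3 : cre (Tf xi xi) = cnorm2 (xi 0%N).
  by have := creB0 xi; rewrite e0 /cre /=; lra.
move: hp; rewrite creB0 => hp.
have [_ Y0] := T_pos ha.
rewrite e3 in cs.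
have X0 := cnorm2_ge0 (xi 0%N).
move: cs hp X0 Y0.
set x := cnorm2 (xi 0%N); set b := cnorm2 (p 0%N); set Y := cre (Tf p p).
move=> cs hp X0 Y0.
have hx0 : x = 0.
  have : x * (b - Y) <= 0 by rewrite mulrBr; lra.
  rewrite pmulr_lle0; [lra | lra].
have z0 : xi 0%N = 0 by apply: cnorm2_eq0.
have zS := T_zero hx (etrans e3 hx0).
by move: hi; case: i => [|i]; rewrite ?z0 ?zS eqxx.
Qed.


Lemma cjE (z : R[i]) : conjc z = Num.conj z. Proof. by []. Qed.
Lemma mulJc (z : R[i]) : z * conjc z = (cnorm2 z)%:C. Proof. exact: mulJ. Qed.

Lemma cjD (z w : R[i]) : (z + w)^cj = z^cj + w^cj.
Proof. by case: z w => [x y] [u v]; apply: cext; rewrite /cre /cim /=; ring. Qed.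
Lemma cjM (z w : R[i]) : (z * w)^cj = z^cj * w^cj.
Proof. by case: z w => [x y] [u v]; apply: cext; rewrite /cre /cim /=; ring. Qed.
Lemma cjN (z : R[i]) : (- z)^cj = - z^cj.
Proof. by case: z => [x y]; apply: cext; rewrite /cre /cim /=. Qed.
Lemma cj0 : (0 : R[i])^cj = 0.
Proof. by apply: cext; rewrite /cre /cim /= ?oppr0. Qed.
Lemma cjR (r : R) : (r%:C)^cj = r%:C.
Proof. by apply: cext; rewrite /cre /cim /= ?oppr0. Qed.
Lemma cjK (z : R[i]) : (z^cj)^cj = z.
Proof. by case: z => [x y]; apply: cext; rewrite /cre /cim /= ?opprK. Qed.

Lemma Bh v w : M v -> M w -> Bform w v = Num.conj (Bform v w).
Proof. exact: B_herm. Qed.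

Lemma B_lin2 a a' v w u t : M v -> M w -> M u -> M t ->
  Bform (fun j => a * v j + (a' * w j + u j)) t =
  a * Bform v t + (a' * Bform w t + Bform u t).
Proof.
move=> hv hw hu ht.
rewrite (B_lin _ hv (M_lin a' hw hu) ht).
by rewrite (B_lin _ hw hu ht).
Qed.

Lemma req_pos p b xi : M p -> M b -> M xi -> 0 < cre (Bform p p) -> 0 < cre (Bform b b) ->
  Bform xi xi = 0 -> Bform p xi != 0 ->
  0 < cre (Bform p b * Bform b xi * Bform xi p).
Proof.
move=> hp hb hx hpp hbb e0 sne.
have sJ := Bh hp hx.
have gJ := Bh hb hp.
have hJ := Bh hb hx.
have Ar := B_real hp.
have Kr := B_real hb.
set s := Bform p xi in sJ sne *.
set A := Bform p p in Ar hpp *.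
set g := Bform b p in gJ *.
set h := Bform b xi in hJ *.
set al := h / s.
have sJne : s^* != 0 by rewrite conjc_eq0.
set be := (g - al * A) / s^*.
have hh : h = al * s by rewrite /al divfK.
have hg : g = al * A + be * s^* by rewrite /be divfK // addrC subrK.
clearbody al be.
pose w := fun j => (- al) * p j + ((- be) * xi j + b j).
have hw : M w by apply: M_lin => //; apply: M_lin.
have wxi : Bform w xi = 0.
  rewrite /w (B_lin2 _ _ hp hx hb hx) e0 -/s -/h hh; ring.
have wp : Bform w p = 0.
  rewrite /w (B_lin2 _ _ hp hx hb hp) -/A -/g (sJ) hg; ring.
have neg := B_neg hp hw hpp wp.
have Eww : Bform w w = - al * (Bform w p)^* + (- be * (Bform w xi)^* + (Bform w b)^*).
  rewrite {1}/w (B_lin2 _ _ hp hx hb hw).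
  by rewrite (Bh hw hp) (Bh hw hx) (Bh hw hb).
rewrite Eww wp wxi /w (B_lin2 _ _ hp hx hb hb) in neg.
rewrite gJ hJ Kr in neg.
rewrite gJ sJ.
clearbody s A g h.
move: neg; rewrite hg hh Ar.
set K := cre (Bform b b).
set a0 := cre A.
rewrite -!cjE. rewrite !(cjD, cjM, cjN, cj0, cjR, cjK).
set X := al * be^cj * s.
have E1 : - al * 0 + (- be * 0 + (- al^cj * (al * a0%:C + be * s^cj) + (- be^cj * (al * s) + K%:C))) =
   K%:C - (al * al^cj) * a0%:C - X - X^cj.
  by rewrite /X !cjM cjK; ring.
have E2 : (al^cj * a0%:C + be^cj * s) * (al * s) * s^cj = ((al * al^cj) * a0%:C + X) * (s * s^cj).
  by rewrite /X; ring.
rewrite E1 E2 !mulJc.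
clearbody X.
rewrite !(creD, creN, creM, cimM, creJ, creR, cimR, cimD).
have := cnorm2_ge0 al; have : 0 < cnorm2 s.
  rewrite lt_neqAle cnorm2_ge0 andbT eq_sym; apply/negP => /eqP /cnorm2_eq0 h0.
  by move: sne; rewrite h0 eqxx.
have : 0 < a0 by [].
move: hbb; rewrite Kr creR -/K.
set c := cnorm2 al; set d := cnorm2 s; set x := cre X.
rewrite !mul0r !subr0 !mulr0 !subr0.
move=> hK ha hd hc hn. have hca : 0 <= c * a0 by rewrite mulr_ge0 // ltW.
have : 0 < c * a0 + x by lra.
by move=> hh1; rewrite mulr_gt0.
Qed.

End G.

Section P.
Variable R : realType.
Variable m : option nat.
Notation M := (in_model m).
Implicit Types (v u w p xi : nat -> R[i]) (a : R[i]).

Lemma cre_sq_le (z : R[i]) : cre z ^+ 2 <= cnorm2 z.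
Proof. by rewrite /cnorm2 lerDl sqr_ge0. Qed.

Lemma B_lin1 a v w u : M v -> M w -> M u ->
  Bform (fun j => a * v j + w j) u = a * Bform v u + Bform w u.
Proof. exact: B_lin. Qed.

Lemma creJc (z : R[i]) : cre (z^cj) = cre z. Proof. exact: creJ. Qed.
Lemma cimJc (z : R[i]) : cim (z^cj) = - cim z. Proof. exact: cimJ. Qed.
Lemma cnorm2N (z : R[i]) : cnorm2 (- z) = cnorm2 z.
Proof. by rewrite /cnorm2 creN cimN !sqrrN. Qed.

Lemma negB_CS v w p : M v -> M w -> M p -> 0 < cre (Bform p p) ->
  Bform v p = 0 -> Bform w p = 0 ->
  cnorm2 (Bform v w) <= cre (Bform v v) * cre (Bform w w).
Proof.
move=> hv hw hp hpp ev ew.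
have Flin : forall a v w u, M v -> M w -> M u ->
  - Bform (fun j => a * v j + w j) u = a * (- Bform v u) + - Bform w u.
  by move=> a v' w' u hv' hw' hu; rewrite (B_lin a hv' hw' hu); ring.
have Fherm : forall v w, M v -> M w -> - Bform w v = (- Bform v w)^*.
  move=> v' w' hv' hw'; rewrite (Bh hv' hw').
  by apply: cext; rewrite ?creN ?cimN -!cjE ?creJc ?cimJc ?creN ?cimN // opprK.
have hz t : M (fun j => - t * w j + v j) by apply: M_lin.
have hzp t : Bform (fun j => - t * w j + v j) p = 0.
  by rewrite (B_lin _ hw hv hp) ew ev; ring.
have := @form_CS R m (fun v w => - Bform v w) Flin Fherm v w hv hw.
rewrite /= cnorm2N !creN !cimN (B_real hv) (B_real hw) !cimR oppr0.
move=> /(_ erefl erefl) H.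
have hw0 := B_neg hp hw hpp ew.
have hv0 := B_neg hp hv hpp ev.
have := H _; rewrite ?creR.
move=> /(_ _) H2.
suff : cnorm2 (Bform v w) <= - cre (Bform v v) * - cre (Bform w w).
  by rewrite mulrNN.
apply: H2.
- by rewrite oppr_ge0.
- move=> t; rewrite creN oppr_ge0; apply: B_neg hp (hz t) hpp (hzp t).
Qed.

Lemma reP_pos p b c : M p -> M b -> M c ->
  0 < cre (Bform p p) -> 0 < cre (Bform b b) -> 0 < cre (Bform c c) ->
  0 < cre (Bform p b * Bform b c * Bform c p).
Proof.
move=> hp hb hc hpp hbb hcc.
have Ar := B_real hp.
have gJ := Bh hb hp.
have cJ := Bh hb hc.
set A := Bform p p in Ar hpp *.
set gb := Bform b p in gJ *.
set gc := Bform c p.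
have Ane : A != 0 by apply/negP => /eqP e; move: hpp; rewrite e /cre /= ltxx.
set be := gb / A.
set ga := gc / A.
have hb' : gb = be * A by rewrite /be divfK.
have hc' : gc = ga * A by rewrite /ga divfK.
clearbody be ga.
pose w1 := fun j => - be * p j + b j.
pose w2 := fun j => - ga * p j + c j.
have hw1 : M w1 by apply: M_lin.
have hw2 : M w2 by apply: M_lin.
have e1 : Bform w1 p = 0 by rewrite /w1 (B_lin _ hp hb hp) -/A -/gb hb'; ring.
have e2 : Bform w2 p = 0 by rewrite /w2 (B_lin _ hp hc hp) -/A -/gc hc'; ring.
have cs := negB_CS hw1 hw2 hp hpp e1 e2.
have n1 := B_neg hp hw1 hpp e1.
have n2 := B_neg hp hw2 hpp e2.
have E11 : Bform w1 w1 = (- be * (Bform w1 p)^cj + (Bform w1 b)^cj).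
  by rewrite {1}/w1 (B_lin _ hp hb hw1) (Bh hw1 hp) (Bh hw1 hb).
have E22 : Bform w2 w2 = (- ga * (Bform w2 p)^cj + (Bform w2 c)^cj).
  by rewrite {1}/w2 (B_lin _ hp hc hw2) (Bh hw2 hp) (Bh hw2 hc).
have E12 : Bform w1 w2 = (- be * (Bform w2 p)^cj + (Bform w2 b)^cj).
  by rewrite {1}/w1 (B_lin _ hp hb hw2) (Bh hw2 hp) (Bh hw2 hb).
rewrite e1 in E11; rewrite e2 in E22 E12.
rewrite /w1 (B_lin _ hp hb hb) in E11.
rewrite /w2 (B_lin _ hp hc hc) in E22.
rewrite /w2 (B_lin _ hp hc hb) in E12.
rewrite E11 E22 E12 in cs n1 n2.
rewrite gJ (B_real hb) in cs n1.
rewrite (Bh hc hp) -/gc (B_real hc) in cs n2.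
rewrite cJ in cs.
rewrite gJ.
set Kx := Bform b c in cs *.
set Kb := cre (Bform b b) in hbb cs n1 n2 *.
set Kc := cre (Bform c c) in hcc cs n1 n2 *.
rewrite hb' in cs n1 n2 *; rewrite hc' in cs n2 *.
clearbody Kx A.
rewrite -!cjE in cs n1 n2 *.
rewrite !(cjD, cjM, cjN, cj0, cjR, cjK) in cs n1 n2 *.
have [a0 Ae] : exists a0 : R, A = a0%:C by exists (cre A).
subst A.
have ha0 : 0 < a0 by move: hpp; rewrite creR.
rewrite !mulr0 !add0r in cs n1 n2.
have e3 : - be^cj * (be * a0%:C) = - ((be * be^cj) * a0%:C) by ring.
have e4 : - ga^cj * (ga * a0%:C) = - ((ga * ga^cj) * a0%:C) by ring.
rewrite e3 mulJc in n1. rewrite e4 mulJc in n2. rewrite e3 e4 !mulJc in cs.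
have KxE : Kx = (- ga^cj * (be * a0%:C) + Kx) + ga^cj * be * a0%:C by ring.
rewrite cjR KxE.
move: cs; set Y := - ga^cj * (be * a0%:C) + Kx => cs.
clearbody Y.
have -> : be^cj * a0%:C * (Y + ga^cj * be * a0%:C) * (ga * a0%:C) =
   a0%:C * a0%:C * ((be^cj * ga) * Y + (be * be^cj) * (ga * ga^cj) * a0%:C) by ring.
rewrite !mulJc.
have hr := cre_sq_le ((be^cj * ga) * Y).
rewrite !cnorm2M in hr.
rewrite (_ : cnorm2 be^cj = cnorm2 be) in hr; last exact: cnorm2J.
move: hr; move: (be^cj * ga * Y) => Z hr.
move: cs n1 n2 hr.
rewrite !(creD, creN, creM, cimM, creR, cimR, cimD, cimN).
rewrite !mulr0 !mul0r !subr0 !addr0.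
set r := cre Z.
set bb := cnorm2 be; set gg := cnorm2 ga; set N := cnorm2 Y.
move=> cs n1 n2 hr.
have hbb0 : 0 <= bb by exact: cnorm2_ge0.
have hgg0 : 0 <= gg by exact: cnorm2_ge0.
have hN : 0 <= N by exact: cnorm2_ge0.
set P1 := bb * a0 in cs n1 *; set Q1 := gg * a0 in cs n2 *.
have hP : 0 < P1 by lra.
have hQ : 0 < Q1 by lra.
have s1 : (- P1 + Kb) * (- Q1 + Kc) < P1 * Q1 by nra.
have hbp : 0 < bb by move: hP; rewrite /P1 pmulr_lgt0.
have hgp : 0 < gg by move: hQ; rewrite /Q1 pmulr_lgt0.
have U0 : 0 < bb * gg by rewrite mulr_gt0.
have s2 : r ^+ 2 < (bb * gg * a0) ^+ 2.
  apply: (le_lt_trans hr).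
  have -> : (bb * gg * a0) ^+ 2 = bb * gg * (P1 * Q1) by rewrite /P1 /Q1; ring.
  rewrite ltr_pM2l //; lra.
have V0 : 0 < bb * gg * a0 by rewrite mulr_gt0.
have s3 : - (bb * gg * a0) < r.
  rewrite ltNge; apply/negP => hle.
  have : (bb * gg * a0) ^+ 2 <= r ^+ 2.
    rewrite -[r ^+ 2]sqrrN; apply: lerXn2r; rewrite ?nnegrE; [lra|lra|lra].
  lra.
rewrite mul0r subr0 mulr_gt0 //; first by rewrite mulr_gt0.
lra.
Qed.
End P.

Section Q.
Variable R : realType.
Variable m : option nat.
Notation M := (in_model m).
Implicit Types (v u w p xi : nat -> R[i]) (a : R[i]).

Lemma B0 w : M w -> Bform (fun=> 0) w = 0.
Proof.
move=> hw.
have := B_lin 1 (@M0 R m) (@M0 R m) hw.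
have -> : (fun j : nat => 1 * (fun=> 0 : R[i]) j + (fun=> 0 : R[i]) j) = fun=> 0.
  by apply/funext => j; rewrite mul1r addr0.
rewrite mul1r => e.
have : Bform (fun=> 0) w + 0 = Bform (fun=> 0) w + Bform (fun=> 0) w by rewrite addr0 {1}e.
by move/addrI => <-.
Qed.

Lemma B_scl a v w : M v -> M w -> Bform (fun j => a * v j) w = a * Bform v w.
Proof.
move=> hv hw.
have := B_lin a hv (@M0 R m) hw.
have -> : (fun j : nat => a * v j + (fun=> 0 : R[i]) j) = fun j => a * v j.
  by apply/funext => j; rewrite addr0.
by rewrite B0 // addr0.
Qed.

Lemma M_scl a v : M v -> M (fun j => a * v j).
Proof.
move=> hv; have := M_lin a hv (@M0 R m).
have -> // : (fun j : nat => a * v j + (fun=> 0 : R[i]) j) = fun j => a * v j.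
by apply/funext => j; rewrite addr0.
Qed.

Lemma B_sclr a v w : M v -> M w -> Bform w (fun j => a * v j) = a^cj * Bform w v.
Proof.
move=> hv hw.
rewrite (Bh (M_scl a hv) hw) (B_scl _ hv hw) (Bh hv hw) -!cjE cjM.
by [].
Qed.

Definition qf xi p b := Bform p b * Bform b xi * Bform xi p.

Lemma qf_swap xi p b : M xi -> M p -> M b -> qf xi b p = (qf xi p b)^cj.
Proof.
move=> hx hp hb; rewrite /qf (Bh hb hp) (Bh hx hp) (Bh hb hx) -!cjE !cjM.
by rewrite cjK; ring.
Qed.

Lemma qf_scale xi p b l1 l2 : M xi -> M p -> M b -> cnorm2 l1 = 1 -> cnorm2 l2 = 1 ->
  qf xi (fun j => l1 * p j) (fun j => l2 * b j) = qf xi p b.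
Proof.
move=> hx hp hb n1 n2.
rewrite /qf (B_scl _ hp (M_scl l2 hb)) (B_sclr _ hb hp) (B_scl _ hb hx) (B_sclr _ hp hx).
have e1 : l1 * l1^cj = 1 by rewrite mulJc n1.
have e2 : l2 * l2^cj = 1 by rewrite mulJc n2.
transitivity ((l1 * l1^cj) * (l2 * l2^cj) * (Bform p b * Bform b xi * Bform xi p)).
  by ring.
by rewrite e1 e2 !mul1r.
Qed.

Lemma RCM (x y : R) : (x * y)%:C = x%:C * y%:C.
Proof. by apply: cext; rewrite ?creM ?cimM ?creR ?cimR; ring. Qed.

Lemma qf_prod xi p b c : M xi -> M p -> M b -> M c ->
  qf xi p b * qf xi b c * qf xi c p =
  (cnorm2 (Bform xi p) * cnorm2 (Bform xi b) * cnorm2 (Bform xi c))%:C *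
  (Bform p b * Bform b c * Bform c p).
Proof.
move=> hx hp hb hc.
rewrite !RCM -!mulJc /qf (Bh hx hp) (Bh hx hb) (Bh hx hc) -!cjE.
by ring.
Qed.


End Q.

Lemma cnorm2_gt0 (R : realType) (z : R[i]) : z != 0 -> 0 < cnorm2 z.
Proof.
move=> hz; rewrite lt_neqAle cnorm2_ge0 andbT eq_sym; apply/negP => /eqP e.
by move: hz; rewrite (cnorm2_eq0 e) eqxx.
Qed.

Lemma cargJc (R : realType) (z : R[i]) : 0 < cre z -> carg (conjc z) = - carg z.
Proof. exact: carg_conj. Qed.

Unset Implicit Arguments.

Theorem mainTheorem6 (R : realType) (G : topologicalType)
    (mul : G -> G -> G) (inv : G -> G) (one : G)
    (HG : is_topological_group mul inv one)
    (m : option nat) (rho : G -> (nat -> R[i]) -> (nat -> R[i]))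
    (Hrho : is_representation mul m rho)
    (x : nat -> R[i]) (Hx : in_Hm m x) :
  (exists y : nat -> R[i], in_boundary m y /\ forall g : G, fixes_point (rho g) y) ->
  exists omega : G -> G -> R,
    (forall g l : G, omega l g = - omega g l) /\
    (forall h g l : G, omega (mul h g) (mul h l) = omega g l) /\
    (forall g l k : G,
       omega l k - omega g k + omega g l = Cart (rho g x) (rho l x) (rho k x)).
Proof.
move=> [y [[yM [ynz yiso]] yfix]].
case: Hrho => HU [Hhom _].
case: Hx => xM xpos.
have TM g v : in_model m v -> in_model m (rho g v).
  by have [Tm _] := HU g; exact: Tm.
have TB g v w : in_model m v -> in_model m w -> Bform (rho g v) (rho g w) = Bform v w.
  by have [_ [_ [Tb _]]] := HU g; exact: Tb.
have posP p : in_model m p -> 0 < cre (Bform p p) -> Bform y p != 0.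
  by move=> hp pp; apply: (B_xi_ne0 hp pp yM yiso ynz).
have qpos p b : in_model m p -> in_model m b -> 0 < cre (Bform p p) ->
    0 < cre (Bform b b) -> 0 < cre (qf y p b).
  move=> hp hb pp bp; apply: (req_pos hp hb yM pp bp yiso).
  by rewrite (Bh yM hp) -cjE conjc_eq0; apply: posP.
pose a g := rho g x.
have aM g : in_model m (a g) by exact: (TM g x xM).
have apos g : 0 < cre (Bform (a g) (a g)) by rewrite /a TB.
exists (fun g l => carg (qf y (a g) (a l))).
split; [|split].
- move=> g l; rewrite (qf_swap yM (aM g) (aM l)).
  by rewrite cargJc // qpos.
- move=> h g l.
  have [l1 n1 E1] := Hhom h g.
  have [l2 n2 E2] := Hhom h l.
  have ea1 : a (mul h g) = fun j => l1 * rho h (a g) j.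
    by apply/funext => j; exact: E1 _ xM j.
  have ea2 : a (mul h l) = fun j => l2 * rho h (a l) j.
    by apply/funext => j; exact: E2 _ xM j.
  rewrite ea1 ea2 (qf_scale yM (TM h _ (aM g)) (TM h _ (aM l)) n1 n2).
  have [mu emu] := yfix h.
  have ey : rho h y = fun j => mu * y j by apply/funext => j; exact: emu.
  set P := rho h (a g); set Q := rho h (a l).
  have PM : in_model m P by exact: (TM h _ (aM g)).
  have QM : in_model m Q by exact: (TM h _ (aM l)).
  have key : (cnorm2 mu)%:C * qf y P Q = qf y (a g) (a l).
    rewrite /qf -(TB h _ _ (aM g) (aM l)) -/P -/Q.
    rewrite -(TB h _ _ (aM l) yM) -(TB h _ _ yM (aM g)) -/P -/Q ey.
    rewrite (B_sclr _ yM QM) (B_scl _ yM PM) -mulJc.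
    by ring.
  have qP : 0 < cre (qf y P Q) by apply: qpos => //; rewrite /P /Q TB.
  have mu0 : 0 < cnorm2 mu.
    rewrite lt_neqAle cnorm2_ge0 andbT eq_sym; apply/negP => /eqP e.
    have := qpos _ _ (aM g) (aM l) (apos g) (apos l).
    by rewrite -key e creM creR cimR !mul0r subr0 ltxx.
  by rewrite -key carg_scale.
- move=> g l k /=.
  have r0 : 0 < cnorm2 (Bform y (a g)) * cnorm2 (Bform y (a l)) * cnorm2 (Bform y (a k)).
    by rewrite !mulr_gt0 // cnorm2_gt0 // posP.
  have h1 := carg_prod3 (qpos _ _ (aM g) (aM l) (apos g) (apos l))
     (qpos _ _ (aM l) (aM k) (apos l) (apos k)) (qpos _ _ (aM k) (aM g) (apos k) (apos g))
     (reP_pos (aM g) (aM l) (aM k) (apos g) (apos l) (apos k)) r0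
     (qf_prod yM (aM g) (aM l) (aM k)).
  rewrite /Cart -h1.
  rewrite (qf_swap yM (aM k) (aM g)) cargJc; last by apply: qpos.
  rewrite /a; lra.
Qed.
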